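(* Let $I=(z_1^3-z_3z_2,\,z_2^2)\subset\mathcal{O}_3$. Then $\mathbf{T}_2(I)=3$ and $\beta_2(I)=4$. More precisely, for $a,b\in\mathbb{C}$ one has $\mathbf{T}_1(I,az_1+bz_2+z_3)=4$ if $a\neq 0$ and $=3$ if $a=0$, while $\mathbf{T}_1(I,az_1+bz_2)=\infty$.
   Context: $\mathcal{O}_n$ denotes the local ring of germs at $0\in\mathbb{C}^n$ of holomorphic functions. $\Gamma$ denotes the set of non-constant germs of holomorphic maps $z\colon(\mathbb{C},0)\to(\mathbb{C}^n,0)$; $v(z)$ is the order of vanishing of $z$ at $0$ and $v(g\circ z)$ the order of vanishing of the one-variable germ $g\circ z$ ($v(0)=\infty$). For an ideal $I\subset\mathcal{O}_n$, $\mathbf{T}_1(I)=\sup_{z\in\Gamma}\inf_{g\in I}\frac{v(g\circ z)}{v(z)}$, and for $q\in\{1,\dots,n\}$, $\mathbf{T}_q(I)=\inf_{\{w_1,\dots,w_{q-1}\}}\mathbf{T}_1(I,w_1,\dots,w_{q-1})$ over all linear functions $w_1,\dots,w_{q-1}$, where $(I,w_1,\dots,w_{q-1})$ is the ideal generated by $I$ and the $w_j$. The generic value $\beta_q(I)$ is the unique $\beta\in\mathbb{R}\cup\{\infty\}$ such that there is a non-empty Zariski open subset $W$ of the Grassmannian $G^{n-q+1}$ of $(n-q+1)$-dimensional linear subspaces of $\mathbb{C}^n$ with $\mathbf{T}_1(I,w_1,\dots,w_{q-1})=\beta$ whenever $\{w_1=\dots=w_{q-1}=0\}\in W$. *)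

(* Defs.v *)
From Stdlib Require Import Reals List Arith.
Import ListNotations.
Open Scope R_scope.

Definition Cx := (R * R)%type.
Definition Czero : Cx := (0, 0).
Definition Cone : Cx := (1, 0).
Definition Cadd (x y : Cx) : Cx := (fst x + fst y, snd x + snd y).
Definition Copp (x : Cx) : Cx := (- fst x, - snd x).
Definition Cmul (x y : Cx) : Cx :=
  (fst x * fst y - snd x * snd y, fst x * snd y + snd x * fst y).
Definition Cnorm (x : Cx) : R := sqrt (fst x * fst x + snd x * snd x).
Definition Csum (l : list Cx) : Cx := fold_right Cadd Czero l.
Definition Cpow (x : Cx) (k : nat) : Cx := Nat.iter k (Cmul x) Cone.

Definition series1 := nat -> Cx.
Definition s1one : series1 := fun k => match k with O => Cone | _ => Czero end.
Definition s1mul (p q : series1) : series1 :=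
  fun k => Csum (map (fun i => Cmul (p i) (q (k - i)%nat)) (seq 0 (S k))).
Definition s1pow (p : series1) (m : nat) : series1 := Nat.iter m (s1mul p) s1one.

(** Power series in n variables: coefficients indexed by exponent lists of length n *)
Definition mseries := list nat -> Cx.
Definition deg (a : list nat) : nat := fold_right plus O a.
Fixpoint below (a : list nat) : list (list nat) :=
  match a with
  | [] => [[]]
  | x :: r => flat_map (fun i => map (cons i) (below r)) (seq 0 (S x))
  end.
Fixpoint lsub (a b : list nat) : list nat :=
  match a, b with
  | x :: a', y :: b' => (x - y)%nat :: lsub a' b'
  | _, _ => []
  end.
Definition msadd (f g : mseries) : mseries := fun a => Cadd (f a) (g a).
Definition msmul (f g : mseries) : mseries :=
  fun a => Csum (map (fun b => Cmul (f b) (g (lsub a b))) (below a)).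
Definition mono (c : Cx) (b : list nat) : mseries :=
  fun a => if list_eq_dec Nat.eq_dec a b then c else Czero.
Definition unitv (n i : nat) : list nat :=
  map (fun j => if Nat.eqb j i then 1%nat else 0%nat) (seq 0 n).
(* linear function c_0 z_1 + ... + c_{n-1} z_n, n = length c *)
Definition linform (c : list Cx) : mseries :=
  fun a => Csum (map (fun i => if list_eq_dec Nat.eq_dec a (unitv (length c) i)
                                then nth i c Czero else Czero) (seq 0 (length c))).

(** Germs at 0 of holomorphic functions on Cx^n = convergent power series *)
Definition is_germ (n : nat) (f : mseries) : Prop :=
  exists M rho : R, forall a, length a = n -> Cnorm (f a) <= M * rho ^ deg a.
Definition is_germ1 (p : series1) : Prop :=
  exists M rho : R, forall k, Cnorm (p k) <= M * rho ^ k.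

Definition is_curve (n : nat) (zs : list series1) : Prop :=
  length zs = n /\ Forall (fun z => is_germ1 z /\ z O = Czero) zs /\
  exists z, In z zs /\ exists k, z k <> Czero.

Fixpoint cmono (zs : list series1) (a : list nat) : series1 :=
  match zs, a with
  | z :: zs', x :: a' => s1mul (s1pow z x) (cmono zs' a')
  | _, _ => s1one
  end.
(* g o z (well defined since z(0) = 0) *)
Definition comp (n : nat) (g : mseries) (zs : list series1) : series1 :=
  fun k => Csum (map (fun a => Cmul (g a) (cmono zs a k))
                     (filter (fun a => Nat.leb (deg a) k) (below (repeat k n)))).

(** orders of vanishing; None stands for infinity *)
Definition order1 (p : series1) (ov : option nat) : Prop :=
  match ov with
  | Some k => p k <> Czero /\ forall j, (j < k)%nat -> p j = Czero
  | None => forall k, p k = Czero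
  end.
Definition curve_order (zs : list series1) (m : nat) : Prop :=
  (exists z, In z zs /\ z m <> Czero) /\
  forall j, (j < m)%nat -> forall z, In z zs -> z j = Czero.

Definition gen_ideal (n : nat) (fs : list mseries) (g : mseries) : Prop :=
  is_germ n g /\
  exists hs : list mseries, length hs = length fs /\ Forall (is_germ n) hs /\
    forall a, length a = n ->
      g a = Csum (map (fun hf => msmul (fst hf) (snd hf) a) (combine hs fs)).

Inductive ER := Fin (r : R) | PInf.
Definition ERle (x y : ER) : Prop :=
  match x, y with
  | Fin a, Fin b => a <= b
  | _, PInf => True
  | PInf, Fin _ => False
  end.
Definition is_glb (S : ER -> Prop) (x : ER) : Prop :=
  (forall y, S y -> ERle x y) /\ (forall l, (forall y, S y -> ERle l y) -> ERle l x).
Definition is_lub (S : ER -> Prop) (x : ER) : Prop :=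
  (forall y, S y -> ERle y x) /\ (forall u, (forall y, S y -> ERle y u) -> ERle x u).

Definition ratio_is (n : nat) (g : mseries) (zs : list series1) (e : ER) : Prop :=
  exists (m : nat) (ov : option nat), curve_order zs m /\ order1 (comp n g zs) ov /\
    e = match ov with Some k => Fin (INR k / INR m) | None => PInf end.

Definition T1_is (n : nat) (J : mseries -> Prop) (t : ER) : Prop :=
  exists inff : list series1 -> ER,
    (forall zs, is_curve n zs ->
       is_glb (fun e => exists g, J g /\ ratio_is n g zs e) (inff zs)) /\
    is_lub (fun e => exists zs, is_curve n zs /\ e = inff zs) t.

Definition Tq_is (n q : nat) (fs : list mseries) (t : ER) : Prop :=
  is_glb (fun e => exists ws : list (list Cx),
            length ws = (q - 1)%nat /\ Forall (fun c => length c = n) ws /\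
            T1_is n (gen_ideal n (fs ++ map linform ws)) e) t.

(** Polynomials (for Zariski open sets): lists of (coefficient, exponent) *)
Definition mpoly := list (Cx * list nat).
Fixpoint mevalpt (pt : list Cx) (a : list nat) : Cx :=
  match pt, a with
  | c :: pt', x :: a' => Cmul (Cpow c x) (mevalpt pt' a')
  | _, _ => Cone
  end.
Definition peval (P : mpoly) (pt : list Cx) : Cx :=
  Csum (map (fun t => Cmul (fst t) (mevalpt pt (snd t))) P).
Definition homogeneous (n : nat) (P : mpoly) (d : nat) : Prop :=
  Forall (fun t => length (snd t) = n /\ deg (snd t) = d) P.

Definition fI1 : mseries := msadd (mono Cone [3;0;0]%nat) (mono (Copp Cone) [0;1;1]%nat).
Definition fI2 : mseries := mono Cone [0;2;0]%nat.
Definition Igens : list mseries := [fI1; fI2].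

(* Main.v *)
Require Import Defs.
From Stdlib Require Import Reals List Lia Lra Ring Setoid Morphisms FunctionalExtensionality Classical ClassicalEpsilon.
Import ListNotations.
Open Scope R_scope.

Arguments Cmul : simpl never.
Arguments Cadd : simpl never.
Arguments Copp : simpl never.

Ltac cx_solve := repeat match goal with x : Cx |- _ => destruct x end;
  unfold Cadd, Cmul, Copp, Czero, Cone; simpl; f_equal; ring.

Lemma Cx_ring : ring_theory Czero Cone Cadd Cmul (fun x y => Cadd x (Copp y)) Copp eq.
Proof. constructor; intros; cx_solve. Qed.
Add Ring CxRing : Cx_ring.

Lemma Cmul_integral x y : Cmul x y = Czero -> x = Czero \/ y = Czero.
Proof.
  destruct x as [a b], y as [c d]; unfold Cmul, Czero; simpl; intro H.
  injection H as H1 H2.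
  destruct (classic (a = 0 /\ b = 0)) as [[-> ->]|Hn]; [left; reflexivity|right].
  assert (Hp : a*a + b*b <> 0).
  { intro E. apply Hn. assert (0 <= a*a) by nra. assert (0 <= b*b) by nra. assert (a*a = 0) by lra. assert (b*b=0) by lra. split; nra. }
  assert (Ec : c*(a*a+b*b) = 0).
  { replace (c*(a*a+b*b)) with (a*(a*c-b*d) + b*(a*d+b*c)) by ring. rewrite H1,H2. ring. }
  assert (Ed : d*(a*a+b*b) = 0).
  { replace (d*(a*a+b*b)) with (a*(a*d+b*c) - b*(a*c-b*d)) by ring. rewrite H1,H2. ring. }
  apply Rmult_integral in Ec; apply Rmult_integral in Ed.
  destruct Ec as [Ec|Ec]; [|contradiction]; destruct Ed as [Ed|Ed]; [|contradiction].
  subst; reflexivity.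
Qed.

Lemma Cmul_neq0 x y : x <> Czero -> y <> Czero -> Cmul x y <> Czero.
Proof. intros Hx Hy E; destruct (Cmul_integral _ _ E); auto. Qed.

Lemma Cone_neq0 : Cone <> Czero.
Proof. unfold Cone, Czero; intro E; injection E; lra. Qed.

Definition lsum {A} (l : list A) (F : A -> Cx) : Cx := Csum (map F l).

#[global] Instance lsum_proper {A} : Proper (eq ==> pointwise_relation A eq ==> eq) (@lsum A).
Proof. intros l l' <- F G H. unfold lsum. f_equal. apply map_ext. exact H. Qed.

Lemma lsum_nil {A} (F : A -> Cx) : lsum [] F = Czero.
Proof. reflexivity. Qed.
Lemma lsum_cons {A} x l (F : A -> Cx) : lsum (x :: l) F = Cadd (F x) (lsum l F).
Proof. reflexivity. Qed.
Lemma lsum_app {A} l1 l2 (F : A -> Cx) : lsum (l1 ++ l2) F = Cadd (lsum l1 F) (lsum l2 F).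
Proof. induction l1; simpl. rewrite lsum_nil; ring. rewrite !lsum_cons, IHl1; ring. Qed.
Lemma lsum_ext {A} l (F G : A -> Cx) : (forall x, In x l -> F x = G x) -> lsum l F = lsum l G.
Proof. intro H. unfold lsum. f_equal. apply map_ext_in. exact H. Qed.
Lemma lsum_add {A} l (F G : A -> Cx) : lsum l (fun x => Cadd (F x) (G x)) = Cadd (lsum l F) (lsum l G).
Proof. induction l. rewrite !lsum_nil; ring. rewrite !lsum_cons, IHl. ring. Qed.
Lemma lsum_opp {A} l (F : A -> Cx) : lsum l (fun x => Copp (F x)) = Copp (lsum l F).
Proof. induction l. rewrite !lsum_nil; ring. rewrite !lsum_cons, IHl. ring. Qed.
Lemma lsum_mull {A} l c (F : A -> Cx) : lsum l (fun x => Cmul c (F x)) = Cmul c (lsum l F).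
Proof. induction l. rewrite !lsum_nil; ring. rewrite !lsum_cons, IHl. ring. Qed.
Lemma lsum_mulr {A} l c (F : A -> Cx) : lsum l (fun x => Cmul (F x) c) = Cmul (lsum l F) c.
Proof. induction l. rewrite !lsum_nil; ring. rewrite !lsum_cons, IHl. ring. Qed.
Lemma lsum_zero {A} l (F : A -> Cx) : (forall x, In x l -> F x = Czero) -> lsum l F = Czero.
Proof. intro H. induction l. reflexivity. rewrite lsum_cons, H, IHl. ring. intros; apply H; simpl; auto. simpl; auto. Qed.
Lemma lsum_swap {A B} l1 l2 (F : A -> B -> Cx) :
  lsum l1 (fun x => lsum l2 (fun y => F x y)) = lsum l2 (fun y => lsum l1 (fun x => F x y)).
Proof.
  induction l1. rewrite lsum_nil. symmetry. apply lsum_zero. reflexivity.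
  rewrite lsum_cons, IHl1. rewrite <- lsum_add. reflexivity.
Qed.
Lemma lsum_flat_map {A B} (G : A -> list B) l (F : B -> Cx) :
  lsum (flat_map G l) F = lsum l (fun x => lsum (G x) F).
Proof. induction l. reflexivity. simpl. rewrite lsum_app, IHl. reflexivity. Qed.
Lemma lsum_map {A B} (g : A -> B) l (F : B -> Cx) : lsum (map g l) F = lsum l (fun x => F (g x)).
Proof. unfold lsum. rewrite map_map. reflexivity. Qed.
Lemma lsum_filter {A} (P : A -> bool) l F :
  lsum (filter P l) F = lsum l (fun x => if P x then F x else Czero).
Proof. induction l. reflexivity. simpl. rewrite (lsum_cons a l). destruct (P a); rewrite ?lsum_cons, IHl; ring. Qed.

Definition sumC (N : nat) (F : nat -> Cx) : Cx := lsum (seq 0 N) F.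
Lemma sumC_S N F : sumC (S N) F = Cadd (sumC N F) (F N).
Proof. unfold sumC. rewrite seq_S, lsum_app. simpl. rewrite lsum_cons, lsum_nil. ring. Qed.
Lemma sumC_0 F : sumC 0 F = Czero.
Proof. reflexivity. Qed.
Lemma sumC_ext N F G : (forall i, (i < N)%nat -> F i = G i) -> sumC N F = sumC N G.
Proof. intro H. apply lsum_ext. intros x Hx. apply in_seq in Hx. apply H. lia. Qed.
Lemma sumC_add N F G : sumC N (fun i => Cadd (F i) (G i)) = Cadd (sumC N F) (sumC N G).
Proof. apply lsum_add. Qed.
Lemma sumC_shift N F : sumC (S N) F = Cadd (F O) (sumC N (fun i => F (S i))).
Proof. unfold sumC. simpl. rewrite lsum_cons. f_equal. rewrite <- seq_shift, lsum_map. reflexivity. Qed.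

Lemma sumC_tri N (F : nat -> nat -> Cx) :
  sumC N (fun a => sumC (S a) (fun b => F b (a - b)%nat)) = sumC N (fun b => sumC (N - b) (fun c => F b c)).
Proof.
  induction N. reflexivity.
  rewrite sumC_S, IHN.
  rewrite (sumC_ext (S N) (fun b => sumC (S N - b) (fun c => F b c))
            (fun b => Cadd (sumC (N - b) (fun c => F b c)) (F b (N - b)%nat))).
  2:{ intros i Hi. replace (S N - i)%nat with (S (N - i)) by lia. apply sumC_S. }
  rewrite sumC_add. rewrite (sumC_S N (fun b => sumC (N - b) (fun c => F b c))). replace (N - N)%nat with O by lia. rewrite sumC_0. ring.
Qed.

Lemma sumC_single N F i0 : (i0 < N)%nat -> (forall i, (i < N)%nat -> i <> i0 -> F i = Czero) -> sumC N F = F i0.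
Proof.
  induction N; intros H1 H2. lia.
  rewrite sumC_S. destruct (Nat.eq_dec i0 N).
  - subst. rewrite (sumC_ext N F (fun _ => Czero)). unfold sumC; rewrite lsum_zero; auto. ring.
    intros i Hi. apply H2; lia.
  - rewrite IHN by (auto; lia). rewrite (H2 N) by lia. ring.
Qed.

#[global] Instance sumC_proper : Proper (eq ==> pointwise_relation nat eq ==> eq) sumC.
Proof. intros n n' <- F G H. unfold sumC. rewrite H. reflexivity. Qed.

Lemma sumC_tri' N (G F : nat -> nat -> Cx) :
  (forall a b, (b <= a)%nat -> G a b = F b (a - b)%nat) ->
  sumC N (fun a => sumC (S a) (G a)) = sumC N (fun b => sumC (N - b) (F b)).
Proof.
  intro H. rewrite <- sumC_tri. apply sumC_ext. intros a _. apply sumC_ext. intros b Hb. apply H. lia.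
Qed.
Lemma sumC_mull N c F : sumC N (fun i => Cmul c (F i)) = Cmul c (sumC N F).
Proof. apply lsum_mull. Qed.
Lemma sumC_mulr N c F : sumC N (fun i => Cmul (F i) c) = Cmul (sumC N F) c.
Proof. apply lsum_mulr. Qed.
Lemma sumC_zero N F : (forall i, (i < N)%nat -> F i = Czero) -> sumC N F = Czero.
Proof. intro H. apply lsum_zero. intros x Hx. apply in_seq in Hx. apply H. lia. Qed.
Lemma sumC_swap N M F : sumC N (fun i => sumC M (fun j => F i j)) = sumC M (fun j => sumC N (fun i => F i j)).
Proof. apply lsum_swap. Qed.

Lemma sumC_rev k F : sumC (S k) F = sumC (S k) (fun i => F (k - i)%nat).
Proof.
  revert F; induction k; intro F.
  - reflexivity.
  - rewrite sumC_shift, IHk. rewrite (sumC_S (S k) (fun i => F (S k - i)%nat)).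
    rewrite Nat.sub_diag.
    rewrite (sumC_ext (S k) (fun i => F (S k - i)%nat) (fun i => F (S (k - i)))).
    + ring.
    + intros i Hi. f_equal. lia.
Qed.

Definition s1add (p q : series1) : series1 := fun k => Cadd (p k) (q k).
Definition s1zero : series1 := fun _ => Czero.
Definition s1opp (p : series1) : series1 := fun k => Copp (p k).

Lemma s1mul_sum p q k : s1mul p q k = sumC (S k) (fun i => Cmul (p i) (q (k - i)%nat)).
Proof. reflexivity. Qed.

Lemma s1mul_1l p : s1mul s1one p = p.
Proof.
  extensionality k. rewrite s1mul_sum. rewrite (sumC_single _ _ O).
  - simpl. rewrite Nat.sub_0_r. unfold s1one. ring.
  - lia.
  - intros i _ Hi. destruct i; [lia|]. simpl. ring.
Qed.

Lemma s1mul_comm p q : s1mul p q = s1mul q p.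
Proof.
  extensionality k. rewrite !s1mul_sum, sumC_rev.
  apply sumC_ext. intros i Hi. replace (k - (k - i))%nat with i by lia. ring.
Qed.

Lemma s1mul_assoc p q r : s1mul p (s1mul q r) = s1mul (s1mul p q) r.
Proof.
  extensionality k. rewrite !s1mul_sum.
  setoid_rewrite s1mul_sum. setoid_rewrite <- sumC_mulr.
  rewrite (sumC_tri' (S k) _ (fun b c => Cmul (Cmul (p b) (q c)) (r (k - (b + c))%nat))).
  2:{ intros a b Hb. f_equal. f_equal. lia. }
  apply sumC_ext. intros b Hb. rewrite <- sumC_mull.
  replace (S k - b)%nat with (S (k - b)) by lia.
  apply sumC_ext. intros c Hc. rewrite Nat.sub_add_distr. ring.
Qed.

Lemma s1mul_distr p q r : s1mul (s1add p q) r = s1add (s1mul p r) (s1mul q r).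
Proof.
  extensionality k. unfold s1add at 2. rewrite !s1mul_sum. rewrite <- sumC_add.
  apply sumC_ext. intros; unfold s1add; ring.
Qed.

Lemma S1_ring : ring_theory s1zero s1one s1add s1mul (fun x y => s1add x (s1opp y)) s1opp eq.
Proof.
  constructor; intros; try (extensionality k; unfold s1add, s1zero, s1opp; ring).
  - apply s1mul_1l.
  - apply s1mul_comm.
  - apply s1mul_assoc.
  - apply s1mul_distr.
Qed.
Add Ring S1Ring : S1_ring.

Lemma s1pow_S z m : s1pow z (S m) = s1mul z (s1pow z m).
Proof. reflexivity. Qed.
Lemma s1pow_0 z : s1pow z 0 = s1one.
Proof. reflexivity. Qed.
Lemma s1pow_add z a b : s1pow z (a + b) = s1mul (s1pow z a) (s1pow z b).
Proof. induction a; simpl plus. rewrite s1pow_0; ring. rewrite !s1pow_S, IHa; ring. Qed.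

Definition ord_ge (p : series1) (n : nat) : Prop := forall j, (j < n)%nat -> p j = Czero.

Lemma ord_ge_mul p q m n : ord_ge p m -> ord_ge q n -> ord_ge (s1mul p q) (m + n).
Proof.
  intros Hp Hq j Hj. rewrite s1mul_sum. apply sumC_zero. intros i Hi.
  destruct (Nat.lt_ge_cases i m). rewrite Hp by auto; ring.
  rewrite Hq by lia; ring.
Qed.

Lemma ord_ge_0 p : ord_ge p 0.
Proof. intros j Hj; lia. Qed.

Lemma ord_ge_le p m n : (n <= m)%nat -> ord_ge p m -> ord_ge p n.
Proof. intros H Hp j Hj. apply Hp. lia. Qed.

Lemma ord_ge_pow z m : z O = Czero -> ord_ge (s1pow z m) m.
Proof.
  intro Hz. induction m. apply ord_ge_0.
  rewrite s1pow_S. replace (S m) with (1 + m)%nat by reflexivity.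
  apply ord_ge_mul; auto. intros j Hj. replace j with O by lia. auto.
Qed.

Lemma mul_at p q m n : ord_ge p m -> ord_ge q n -> s1mul p q (m + n)%nat = Cmul (p m) (q n).
Proof.
  intros Hp Hq. rewrite s1mul_sum. rewrite (sumC_single _ _ m).
  - f_equal. f_equal. lia.
  - lia.
  - intros i Hi Hne. destruct (Nat.lt_ge_cases i m). rewrite Hp by auto; ring.
    rewrite Hq by lia; ring.
Qed.

Fixpoint lle (c M : list nat) : Prop :=
  match c, M with
  | [], [] => True
  | x :: c', y :: M' => (x <= y)%nat /\ lle c' M'
  | _, _ => False
  end.

Lemma in_below c M : In c (below M) <-> lle c M.
Proof.
  revert c; induction M as [|y M IH]; intro c.
  - simpl. destruct c; simpl; intuition congruence.
  - change (below (y::M)) with (flat_map (fun i => map (cons i) (below M)) (seq 0 (S y))).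
    rewrite in_flat_map. split.
    + intros [i [Hi Hc]]. apply in_map_iff in Hc. destruct Hc as [c' [<- Hc']].
      apply in_seq in Hi. simpl. split; [lia|]. apply IH; auto.
    + destruct c as [|x c']; [simpl; tauto|]. intros [Hx Hc]. exists x. split.
      apply in_seq; lia. apply in_map. apply IH; auto.
Qed.

Lemma below_cons_sum x r F :
  lsum (below (x :: r)) F = sumC (S x) (fun i => lsum (below r) (fun b => F (i :: b))).
Proof.
  change (below (x::r)) with (flat_map (fun i => map (cons i) (below r)) (seq 0 (S x))).
  rewrite lsum_flat_map. apply lsum_ext. intros. rewrite lsum_map. reflexivity.
Qed.

Lemma below_nil_sum F : lsum (below []) F = F [].
Proof. simpl. rewrite lsum_cons, lsum_nil. ring. Qed.

Lemma below_reindex M (G : list nat -> list nat -> Cx) :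
  lsum (below M) (fun a => lsum (below a) (fun b => G b (lsub a b))) =
  lsum (below M) (fun b => lsum (below (lsub M b)) (fun c => G b c)).
Proof.
  revert G; induction M as [|x r IH]; intro G.
  - rewrite !below_nil_sum. reflexivity.
  - rewrite !below_cons_sum.
    setoid_rewrite below_cons_sum.
    transitivity (sumC (S x) (fun i => sumC (S i) (fun j => lsum (below r) (fun b =>
        lsum (below (lsub r b)) (fun c => G (j :: b) ((i - j)%nat :: c)))))).
    { apply sumC_ext; intros i Hi. unfold sumC at 1. rewrite lsum_swap. fold (sumC (S i)).
      apply sumC_ext; intros j Hj.
      apply (IH (fun b c => G (j :: b) ((i - j)%nat :: c))). }
    rewrite (sumC_tri' (S x) _ (fun b c => lsum (below r) (fun b' =>
        lsum (below (lsub r b')) (fun c' => G (b :: b') (c :: c'))))).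
    2:{ intros; reflexivity. }
    apply sumC_ext; intros i Hi. replace (S x - i)%nat with (S (x - i)) by lia.
    unfold sumC. rewrite lsum_swap. reflexivity.
Qed.

Lemma sumC_ext_range N M F : (M <= N)%nat -> (forall i, (M <= i < N)%nat -> F i = Czero) -> sumC N F = sumC M F.
Proof.
  induction N; intros H1 H2. replace M with O by lia. reflexivity.
  destruct (Nat.eq_dec M (S N)). subst; reflexivity.
  rewrite sumC_S, IHN. rewrite H2 by lia. ring. lia. intros; apply H2; lia.
Qed.

Lemma lle_length c M : lle c M -> length c = length M.
Proof. revert M; induction c as [|x c IH]; destruct M; simpl; intros H; try contradiction; auto. destruct H; f_equal; auto. Qed.

Lemma below_ext M' M F : lle M' M -> (forall c, lle c M -> ~ lle c M' -> F c = Czero) ->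
  lsum (below M') F = lsum (below M) F.
Proof.
  revert M' F; induction M as [|x r IH]; intros M' F H1 H2.
  - destruct M'; [reflexivity|destruct H1].
  - destruct M' as [|x' r']; [destruct H1|]. destruct H1 as [Hx Hr].
    rewrite !below_cons_sum. symmetry.
    rewrite (sumC_ext_range (S x) (S x')).
    2: lia.
    2:{ intros i Hi. apply lsum_zero. intros c Hc. apply in_below in Hc. apply H2.
        simpl; split; [lia|auto]. simpl. intros [? ?]; lia. }
    apply sumC_ext; intros i Hi. symmetry. apply IH; auto.
    intros c Hc Hn. apply H2. simpl; split; [lia|auto]. intros [? ?]; auto.
Qed.

Fixpoint ladd (a b : list nat) : list nat :=
  match a, b with
  | x :: a', y :: b' => (x + y)%nat :: ladd a' b'
  | _, _ => []
  end.

Lemma cmono_add zs b c : length b = length c -> cmono zs (ladd b c) = s1mul (cmono zs b) (cmono zs c).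
Proof.
  revert b c; induction zs as [|z zs IH]; intros b c H.
  - destruct b, c; simpl; ring.
  - destruct b as [|x b], c as [|y c]; simpl in H; try discriminate.
    + simpl. ring.
    + simpl. rewrite IH by lia. rewrite s1pow_add. ring.
Qed.

Lemma ladd_lsub b a : lle b a -> ladd b (lsub a b) = a.
Proof. revert a; induction b as [|x b IH]; destruct a as [|y a]; simpl; intro H; try contradiction; auto.
  destruct H as [H1 H2]. f_equal. lia. auto. Qed.

Lemma lsub_length a b : length (lsub a b) = Nat.min (length a) (length b).
Proof. revert b; induction a; destruct b; simpl; auto. Qed.

Lemma cmono_ord zs a : Forall (fun z => z O = Czero) zs -> (length a <= length zs)%nat ->
  ord_ge (cmono zs a) (deg a).
Proof.
  revert a; induction zs as [|z zs IH]; intros a Hz Hl.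
  - destruct a; simpl in Hl; [apply ord_ge_0|lia].
  - destruct a as [|x a]. apply ord_ge_0. inversion Hz; subst.
    simpl. apply ord_ge_mul. apply ord_ge_pow; auto. apply IH; auto. simpl in Hl; lia.
Qed.

Lemma lle_repeat k K n : (k <= K)%nat -> lle (repeat k n) (repeat K n).
Proof. induction n; simpl; auto. Qed.

Lemma lle_repeat_deg c k K n : lle c (repeat K n) -> ~ lle c (repeat k n) -> (k < deg c)%nat.
Proof.
  revert c; induction n; intros c H1 H2; destruct c as [|x c]; simpl in *; try tauto.
  destruct H1 as [Hx Hc]. destruct (Nat.le_gt_cases x k).
  - assert (~ lle c (repeat k n)) by tauto. specialize (IHn c Hc H0). lia.
  - lia.
Qed.

Lemma lle_repeat_len c k n : lle c (repeat k n) -> length c = n.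
Proof. intro H; apply lle_length in H; rewrite repeat_length in H; auto. Qed.

Lemma comp_box n g zs k K : length zs = n -> Forall (fun z => z O = Czero) zs -> (k <= K)%nat ->
  Defs.comp n g zs k = lsum (below (repeat K n)) (fun a => Cmul (g a) (cmono zs a k)).
Proof.
  intros Hl Hz HK. unfold Defs.comp. fold (lsum (filter (fun a => Nat.leb (deg a) k) (below (repeat k n)))
     (fun a => Cmul (g a) (cmono zs a k))).
  rewrite lsum_filter.
  rewrite (below_ext (repeat k n) (repeat K n)).
  - apply lsum_ext. intros a Ha. apply in_below in Ha.
    destruct (Nat.leb_spec (deg a) k). reflexivity.
    rewrite (cmono_ord zs a); auto. ring. apply lle_repeat_len in Ha; lia.
  - apply lle_repeat; auto.
  - intros c H1 H2. assert (k < deg c)%nat by (eapply lle_repeat_deg; eauto).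
    destruct (Nat.leb_spec (deg c) k). lia. reflexivity.
Qed.

Lemma lle_lsub_repeat b k n : length b = n -> lle (lsub (repeat k n) b) (repeat k n).
Proof. revert b; induction n; intros b Hb; destruct b; simpl in *; try discriminate; auto. split; [lia|]. apply IHn; lia. Qed.

Lemma lle_lsub_deg b c k n : lle b (repeat k n) -> lle c (repeat k n) -> ~ lle c (lsub (repeat k n) b) ->
  (k < deg b + deg c)%nat.
Proof.
  revert b c; induction n; intros b c Hb Hc Hn; destruct b as [|x b]; destruct c as [|y c]; simpl in *; try tauto.
  destruct Hb as [Hx Hb]; destruct Hc as [Hy Hc].
  destruct (Nat.le_gt_cases y (k - x)).
  - assert (~ lle c (lsub (repeat k n) b)) by tauto. specialize (IHn b c Hb Hc H0). lia.
  - lia.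
Qed.

Lemma comp_mul n zs h f k : length zs = n -> Forall (fun z => z O = Czero) zs ->
  Defs.comp n (msmul h f) zs k = s1mul (Defs.comp n h zs) (Defs.comp n f zs) k.
Proof.
  intros Hl Hz.
  rewrite (comp_box n _ zs k k) by auto.
  transitivity (lsum (below (repeat k n)) (fun a => lsum (below a) (fun b =>
     (fun b c => Cmul (Cmul (h b) (f c)) (s1mul (cmono zs b) (cmono zs c) k)) b (lsub a b)))).
  { apply lsum_ext. intros a Ha. apply in_below in Ha. unfold msmul.
    fold (lsum (below a) (fun b => Cmul (h b) (f (lsub a b)))).
    rewrite <- lsum_mulr. apply lsum_ext. intros b Hb. apply in_below in Hb.
    rewrite <- (cmono_add zs b (lsub a b)).
    - rewrite ladd_lsub by auto. ring.
    - rewrite lsub_length. apply lle_length in Hb. lia. }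
  rewrite (below_reindex (repeat k n) (fun b c => Cmul (Cmul (h b) (f c)) (s1mul (cmono zs b) (cmono zs c) k))).
  transitivity (lsum (below (repeat k n)) (fun b => lsum (below (repeat k n)) (fun c =>
     Cmul (Cmul (h b) (f c)) (s1mul (cmono zs b) (cmono zs c) k)))).
  { apply lsum_ext. intros b Hb. apply in_below in Hb. apply below_ext.
    - apply lle_repeat_len in Hb. apply lle_lsub_repeat; auto.
    - intros c Hc Hn. pose proof (lle_lsub_deg b c k n Hb Hc Hn).
      rewrite (ord_ge_mul _ _ (deg b) (deg c)). ring.
      apply cmono_ord; auto. apply lle_repeat_len in Hb; lia.
      apply cmono_ord; auto. apply lle_repeat_len in Hc; lia. auto. }
  rewrite s1mul_sum.
  rewrite (sumC_ext (S k) _ (fun p => lsum (below (repeat k n)) (fun b => lsum (below (repeat k n)) (fun c =>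
     Cmul (Cmul (h b) (f c)) (Cmul (cmono zs b p) (cmono zs c (k - p)%nat)))))).
  2:{ intros p Hp. rewrite (comp_box n h zs p k) by (auto; lia).
      rewrite (comp_box n f zs (k - p) k) by (auto; lia).
      rewrite <- lsum_mulr. apply lsum_ext. intros b _. rewrite <- lsum_mull. apply lsum_ext. intros c _. ring. }
  symmetry. unfold sumC. rewrite lsum_swap. apply lsum_ext. intros b _. rewrite lsum_swap. apply lsum_ext. intros c _.
  rewrite s1mul_sum. unfold sumC. rewrite <- lsum_mull. apply lsum_ext. intros; ring.
Qed.

Lemma comp_ext n g g' zs k : (forall a, length a = n -> g a = g' a) ->
  Defs.comp n g zs k = Defs.comp n g' zs k.
Proof.
  intro H. unfold Defs.comp. f_equal. apply map_ext_in. intros a Ha.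
  apply filter_In in Ha. destruct Ha as [Ha _]. apply in_below in Ha. apply lle_repeat_len in Ha.
  rewrite H; auto.
Qed.

Lemma comp_add n g1 g2 zs k : Defs.comp n (fun a => Cadd (g1 a) (g2 a)) zs k =
  Cadd (Defs.comp n g1 zs k) (Defs.comp n g2 zs k).
Proof.
  unfold Defs.comp. fold (lsum (filter (fun a => Nat.leb (deg a) k) (below (repeat k n))) (fun a => Cmul (Cadd (g1 a) (g2 a)) (cmono zs a k))).
  rewrite (lsum_ext _ _ (fun a => Cadd (Cmul (g1 a) (cmono zs a k)) (Cmul (g2 a) (cmono zs a k)))).
  apply lsum_add. intros; ring.
Qed.

Lemma comp_zero n zs k : Defs.comp n (fun _ => Czero) zs k = Czero.
Proof.
  unfold Defs.comp. fold (lsum (filter (fun a => Nat.leb (deg a) k) (below (repeat k n))) (fun a => Cmul Czero (cmono zs a k))).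
  apply lsum_zero. intros; ring.
Qed.

Lemma lsum_below_delta M b X : lle b M ->
  lsum (below M) (fun a => if list_eq_dec Nat.eq_dec a b then X a else Czero) = X b.
Proof.
  revert b X; induction M as [|x r IH]; intros b X H.
  - destruct b; [|destruct H]. rewrite below_nil_sum. destruct (list_eq_dec Nat.eq_dec [] []); congruence.
  - destruct b as [|y b]; [destruct H|]. destruct H as [Hy Hb].
    rewrite below_cons_sum. rewrite (sumC_single _ _ y).
    + rewrite <- (IH b (fun a => X (y :: a))) by auto. apply lsum_ext. intros a _.
      destruct (list_eq_dec Nat.eq_dec (y :: a) (y :: b)), (list_eq_dec Nat.eq_dec a b); congruence.
    + lia.
    + intros i Hi Hne. apply lsum_zero. intros a _.
      destruct (list_eq_dec Nat.eq_dec (i :: a) (y :: b)); congruence.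
Qed.

Lemma lle_b_repeat b K n : length b = n -> (deg b <= K)%nat -> lle b (repeat K n).
Proof.
  revert b; induction n; intros b Hb Hd; destruct b as [|x b]; simpl in *; try discriminate; auto.
  split; [lia|]. apply IHn; lia.
Qed.

Lemma comp_mono n zs c b k : length zs = n -> Forall (fun z => z O = Czero) zs -> length b = n ->
  Defs.comp n (mono c b) zs k = Cmul c (cmono zs b k).
Proof.
  intros Hl Hz Hb. rewrite (comp_box n _ zs k (k + deg b)%nat) by (auto; lia).
  rewrite <- (lsum_below_delta (repeat (k + deg b)%nat n) b (fun a => Cmul c (cmono zs a k))).
  - apply lsum_ext. intros a _. unfold mono. destruct (list_eq_dec Nat.eq_dec a b); ring.
  - apply lle_b_repeat; auto; lia.
Qed.

Lemma comp_gen n zs g L k : length zs = n -> Forall (fun z => z O = Czero) zs ->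
  (forall a, length a = n -> g a = Csum (map (fun hf => msmul (fst hf) (snd hf) a) L)) ->
  Defs.comp n g zs k = lsum L (fun hf => s1mul (Defs.comp n (fst hf) zs) (Defs.comp n (snd hf) zs) k).
Proof.
  intros Hl Hz Hg. rewrite (comp_ext n g _ zs k Hg). clear Hg g.
  induction L as [|hf L IH].
  - apply comp_zero.
  - rewrite lsum_cons. simpl map. simpl Csum. rewrite comp_add, IH, comp_mul; auto.
Qed.

Lemma ideal_vanish n fs zs g K : length zs = n -> Forall (fun z => z O = Czero) zs ->
  gen_ideal n fs g -> (forall f, In f fs -> ord_ge (Defs.comp n f zs) K) ->
  ord_ge (Defs.comp n g zs) K.
Proof.
  intros Hl Hz [_ [hs [_ [_ Hg]]]] Hf j Hj.
  rewrite (comp_gen n zs g (combine hs fs) j Hl Hz Hg).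
  apply lsum_zero. intros [h f] Hin. simpl.
  apply (ord_ge_mul _ _ 0 K). apply ord_ge_0. apply Hf. eapply in_combine_r; eauto. simpl; auto.
Qed.

Definition Zs0 (zs : list series1) := Forall (fun z => z O = Czero) zs.

Lemma comp_f1 z1 z2 z3 k : Zs0 [z1;z2;z3] ->
  Defs.comp 3 fI1 [z1;z2;z3] k = Cadd (s1pow z1 3 k) (Copp (s1mul z2 z3 k)).
Proof.
  intro Hz. unfold fI1, msadd. rewrite comp_add, !comp_mono; auto.
  replace (cmono [z1;z2;z3] [3;0;0]%nat) with (s1pow z1 3).
  replace (cmono [z1;z2;z3] [0;1;1]%nat) with (s1mul z2 z3). ring.
  all: simpl cmono; rewrite ?s1pow_0, ?s1pow_S, ?s1pow_0; ring.
Qed.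

Lemma comp_f2 z1 z2 z3 k : Zs0 [z1;z2;z3] ->
  Defs.comp 3 fI2 [z1;z2;z3] k = s1mul z2 z2 k.
Proof.
  intro Hz. unfold fI2. rewrite comp_mono; auto.
  replace (cmono [z1;z2;z3] [0;2;0]%nat) with (s1mul z2 z2). ring.
  simpl cmono; rewrite ?s1pow_0, ?s1pow_S, ?s1pow_0; ring.
Qed.

Lemma comp_lin z1 z2 z3 a b c k : Zs0 [z1;z2;z3] ->
  Defs.comp 3 (linform [a;b;c]) [z1;z2;z3] k = Cadd (Cmul a (z1 k)) (Cadd (Cmul b (z2 k)) (Cmul c (z3 k))).
Proof.
  intro Hz.
  rewrite (comp_ext 3 _ (fun x => Cadd (mono a [1;0;0]%nat x) (Cadd (mono b [0;1;0]%nat x)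
     (Cadd (mono c [0;0;1]%nat x) ((fun _ => Czero) x))))) by (intros; reflexivity).
  rewrite !comp_add, !comp_mono, comp_zero; auto.
  replace (cmono [z1;z2;z3] [1;0;0]%nat) with z1.
  replace (cmono [z1;z2;z3] [0;1;0]%nat) with z2.
  replace (cmono [z1;z2;z3] [0;0;1]%nat) with z3. ring.
  all: simpl cmono; rewrite ?s1pow_0, ?s1pow_S, ?s1pow_0; ring.
Qed.

Lemma ERle_trans x y z : ERle x y -> ERle y z -> ERle x z.
Proof. destruct x, y, z; simpl; intuition lra. Qed.

Lemma glb_exists (S : ER -> Prop) : (forall y, S y -> ERle (Fin 0) y) -> exists x, Defs.is_glb S x.
Proof.
  intro Hpos.
  destruct (classic (exists r, S (Fin r))) as [[r0 Hr0]|Hno].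
  - set (E := fun x => S (Fin (- x))).
    assert (Hb : bound E).
    { exists 0. intros x Hx. specialize (Hpos _ Hx). simpl in Hpos. lra. }
    assert (He : exists x, E x). { exists (- r0). unfold E. rewrite Ropp_involutive. auto. }
    destruct (completeness E Hb He) as [m [Hm1 Hm2]].
    exists (Fin (- m)). split.
    + intros [r|] Hy; simpl; auto.
      assert (E (- r)) by (unfold E; rewrite Ropp_involutive; auto).
      specialize (Hm1 _ H). lra.
    + intros [u|] Hl; simpl.
      * assert (m <= - u).
        { apply Hm2. intros x Hx. specialize (Hl _ Hx). simpl in Hl. lra. }
        lra.
      * specialize (Hl _ Hr0). simpl in Hl. auto.
  - exists PInf. split.
    + intros [r|] Hy; simpl; auto. apply Hno. exists r; auto.
    + intros [u|] _; simpl; auto.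
Qed.

Definition rset n J zs := fun e => exists g, J g /\ ratio_is n g zs e.

Definition inffJ n (J : mseries -> Prop) (zs : list series1) : ER :=
  epsilon (inhabits PInf) (fun x => Defs.is_glb (rset n J zs) x).

Lemma curve_order_pos n zs m : is_curve n zs -> curve_order zs m -> (0 < m)%nat.
Proof.
  intros [_ [Hf _]] [[z [Hz Hm]] _]. destruct m; [|lia]. exfalso. apply Hm.
  rewrite Forall_forall in Hf. apply Hf; auto.
Qed.

Lemma rset_pos n J zs : is_curve n zs -> forall y, rset n J zs y -> ERle (Fin 0) y.
Proof.
  intros Hc y [g [_ [m [ov [Hm [_ ->]]]]]]. destruct ov as [k|]; simpl; auto.
  pose proof (curve_order_pos _ _ _ Hc Hm).
  unfold Rdiv. apply Rmult_le_pos. apply pos_INR. left. apply Rinv_0_lt_compat. apply lt_0_INR; auto.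
Qed.

Lemma inffJ_spec n J zs : is_curve n zs -> Defs.is_glb (rset n J zs) (inffJ n J zs).
Proof.
  intro Hc. unfold inffJ. apply epsilon_spec. apply glb_exists. apply rset_pos; auto.
Qed.

Lemma T1_fin n J t :
  (forall zs, is_curve n zs -> exists g e, J g /\ ratio_is n g zs e /\ ERle e (Fin t)) ->
  (exists zs0, is_curve n zs0 /\ forall g e, J g -> ratio_is n g zs0 e -> ERle (Fin t) e) ->
  T1_is n J (Fin t).
Proof.
  intros Hup [zs0 [Hc0 Hlow]]. exists (inffJ n J). split.
  - intros zs Hc. apply inffJ_spec; auto.
  - split.
    + intros y [zs [Hc ->]]. destruct (Hup zs Hc) as [g [e [Hg [He Hle]]]].
      destruct (inffJ_spec n J zs Hc) as [H1 _]. eapply ERle_trans; [apply H1|exact Hle].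
      exists g; auto.
    + intros u Hu. specialize (Hu (inffJ n J zs0) (ex_intro _ zs0 (conj Hc0 eq_refl))).
      destruct (inffJ_spec n J zs0 Hc0) as [_ H2].
      eapply ERle_trans; [|exact Hu]. apply H2. intros y [g [Hg Hy]]. eapply Hlow; eauto.
Qed.

Lemma T1_inf n J :
  (exists zs0, is_curve n zs0 /\ forall g e, J g -> ratio_is n g zs0 e -> e = PInf) ->
  T1_is n J PInf.
Proof.
  intros [zs0 [Hc0 Hlow]]. exists (inffJ n J). split.
  - intros zs Hc. apply inffJ_spec; auto.
  - split.
    + intros y _. destruct y; simpl; auto.
    + intros u Hu. specialize (Hu (inffJ n J zs0) (ex_intro _ zs0 (conj Hc0 eq_refl))).
      destruct (inffJ_spec n J zs0 Hc0) as [_ H2].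
      eapply ERle_trans; [|exact Hu]. apply H2. intros y [g [Hg Hy]].
      rewrite (Hlow g y Hg Hy). simpl; auto.
Qed.

Lemma T1_ge n J e t zs0 : T1_is n J e -> is_curve n zs0 ->
  (forall g e', J g -> ratio_is n g zs0 e' -> ERle (Fin t) e') -> ERle (Fin t) e.
Proof.
  intros [inff [H1 [H2 _]]] Hc Hl.
  eapply ERle_trans; [|apply H2; exists zs0; split; eauto].
  destruct (H1 zs0 Hc) as [_ H3]. apply H3. intros y [g [Hg Hy]]. eauto.
Qed.

Lemma div_le_R k m t : 0 < m -> k <= t * m -> k / m <= t.
Proof.
  intros Hm H. apply (Rmult_le_reg_r m); auto. unfold Rdiv. rewrite Rmult_assoc, Rinv_l by lra. lra.
Qed.
Lemma div_ge_R k m t : 0 < m -> t * m <= k -> t <= k / m.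
Proof.
  intros Hm H. apply (Rmult_le_reg_r m); auto. unfold Rdiv. rewrite Rmult_assoc, Rinv_l by lra. lra.
Qed.

Lemma Cnorm_nonneg x : 0 <= Cnorm x.
Proof. apply sqrt_pos. Qed.

Lemma Cnorm_zero : Cnorm Czero = 0.
Proof. unfold Cnorm, Czero; simpl. replace (0*0+0*0) with 0 by ring. apply sqrt_0. Qed.

Lemma Cnorm_opp x : Cnorm (Copp x) = Cnorm x.
Proof. unfold Cnorm, Copp; simpl. f_equal. ring. Qed.

Lemma Cnorm_one : Cnorm Cone = 1.
Proof. unfold Cnorm, Cone; simpl. replace (1*1+0*0) with 1 by ring. apply sqrt_1. Qed.

Lemma Cnorm_tri x y : Cnorm (Cadd x y) <= Cnorm x + Cnorm y.
Proof.
  destruct x as [a b], y as [c d]. unfold Cnorm, Cadd; simpl.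
  set (S1 := sqrt (a*a+b*b)). set (S2 := sqrt (c*c+d*d)).
  assert (H1 : S1 * S1 = a*a+b*b) by (apply sqrt_sqrt; nra).
  assert (H2 : S2 * S2 = c*c+d*d) by (apply sqrt_sqrt; nra).
  assert (P1 : 0 <= S1) by apply sqrt_pos. assert (P2 : 0 <= S2) by apply sqrt_pos.
  assert (HP : 0 <= S1 * S2) by nra.
  assert (HC : (a*c+b*d)*(a*c+b*d) <= (S1*S2)*(S1*S2)).
  { replace ((S1*S2)*(S1*S2)) with ((S1*S1)*(S2*S2)) by ring. rewrite H1, H2.
    assert (E: (a*a+b*b)*(c*c+d*d) = (a*c+b*d)*(a*c+b*d) + (a*d-b*c)*(a*d-b*c)) by ring.
    pose proof (Rle_0_sqr (a*d-b*c)). unfold Rsqr in *. lra. }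
  assert (HC2 : a*c+b*d <= S1*S2) by nra.
  rewrite <- (sqrt_square (S1 + S2)) by lra.
  apply sqrt_le_1_alt. nra.
Qed.

Lemma germ_bound n f M : (forall a, length a = n -> Cnorm (f a) <= M) -> is_germ n f.
Proof. intro H. exists M, 1. intros a Ha. rewrite pow1, Rmult_1_r. auto. Qed.

Lemma Cnorm_mono c b a : Cnorm (mono c b a) <= Cnorm c.
Proof. unfold mono. destruct (list_eq_dec Nat.eq_dec a b). lra. rewrite Cnorm_zero. apply Cnorm_nonneg. Qed.

Lemma germ_fI1 : is_germ 3 fI1.
Proof.
  apply (germ_bound _ _ 2). intros a _. unfold fI1, msadd.
  eapply Rle_trans. apply Cnorm_tri.
  pose proof (Cnorm_mono Cone [3;0;0]%nat a). pose proof (Cnorm_mono (Copp Cone) [0;1;1]%nat a).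
  rewrite Cnorm_opp, Cnorm_one in *. lra.
Qed.

Lemma germ_fI2 : is_germ 3 fI2.
Proof.
  apply (germ_bound _ _ 1). intros a _. unfold fI2. rewrite <- Cnorm_one. apply Cnorm_mono.
Qed.

Lemma germ_lin a b c : is_germ 3 (linform [a;b;c]).
Proof.
  apply (germ_bound _ _ (Cnorm a + Cnorm b + Cnorm c)). intros x _.
  change (linform [a;b;c] x) with (Cadd (mono a [1;0;0]%nat x) (Cadd (mono b [0;1;0]%nat x)
     (Cadd (mono c [0;0;1]%nat x) Czero))).
  pose proof (Cnorm_mono a [1;0;0]%nat x). pose proof (Cnorm_mono b [0;1;0]%nat x).
  pose proof (Cnorm_mono c [0;0;1]%nat x).
  pose proof (Cnorm_tri (mono a [1;0;0]%nat x) (Cadd (mono b [0;1;0]%nat x) (Cadd (mono c [0;0;1]%nat x) Czero))).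
  pose proof (Cnorm_tri (mono b [0;1;0]%nat x) (Cadd (mono c [0;0;1]%nat x) Czero)).
  pose proof (Cnorm_tri (mono c [0;0;1]%nat x) Czero). rewrite Cnorm_zero in *. lra.
Qed.

Definition delta0 : mseries := mono Cone [0;0;0]%nat.
Definition mzero : mseries := fun _ => Czero.

Lemma germ_delta0 : is_germ 3 delta0.
Proof. apply (germ_bound _ _ 1). intros a _. rewrite <- Cnorm_one. apply Cnorm_mono. Qed.
Lemma germ_mzero : is_germ 3 mzero.
Proof. apply (germ_bound _ _ 0). intros a _. unfold mzero. rewrite Cnorm_zero. lra. Qed.

Lemma msmul_delta0 f a : length a = 3%nat -> msmul delta0 f a = f a.
Proof.
  intro Ha. unfold msmul. fold (lsum (below a) (fun b => Cmul (delta0 b) (f (lsub a b)))).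
  rewrite (lsum_ext _ _ (fun b => if list_eq_dec Nat.eq_dec b [0;0;0]%nat then Cmul Cone (f (lsub a b)) else Czero)).
  - rewrite lsum_below_delta.
    + destruct a as [|x [|y [|z [|]]]]; simpl in Ha; try discriminate. simpl. rewrite !Nat.sub_0_r. ring.
    + destruct a as [|x [|y [|z [|]]]]; simpl in Ha; try discriminate. simpl. repeat split; lia.
  - intros b _. unfold delta0, mono. destruct (list_eq_dec Nat.eq_dec b [0;0;0]%nat); ring.
Qed.

Lemma msmul_mzero f a : msmul mzero f a = Czero.
Proof.
  unfold msmul. fold (lsum (below a) (fun b => Cmul (mzero b) (f (lsub a b)))). apply lsum_zero.
  intros; unfold mzero; ring.
Qed.


Lemma gens_in w : is_germ 3 w -> forall f, In f (Igens ++ [w]) -> gen_ideal 3 (Igens ++ [w]) f.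
Proof.
  intros Hw f Hf. change (Igens ++ [w]) with [fI1; fI2; w] in *.
  assert (HG : Forall (is_germ 3) [delta0; mzero; mzero] /\ Forall (is_germ 3) [mzero; delta0; mzero] /\
               Forall (is_germ 3) [mzero; mzero; delta0]).
  { pose proof germ_delta0; pose proof germ_mzero. repeat split; repeat constructor; auto. }
  destruct HG as [HG1 [HG2 HG3]].
  destruct Hf as [<-|[<-|[<-|[]]]]; split.
  - apply germ_fI1.
  - exists [delta0; mzero; mzero]. split; [reflexivity|]. split; auto. intros a Ha.
    cbn [combine map Csum fold_right fst snd]. rewrite msmul_delta0, !msmul_mzero by auto. ring.
  - apply germ_fI2.
  - exists [mzero; delta0; mzero]. split; [reflexivity|]. split; auto. intros a Ha.
    cbn [combine map Csum fold_right fst snd]. rewrite msmul_delta0, !msmul_mzero by auto. ring.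
  - auto.
  - exists [mzero; mzero; delta0]. split; [reflexivity|]. split; auto. intros a Ha.
    cbn [combine map Csum fold_right fst snd]. rewrite msmul_delta0, !msmul_mzero by auto. ring.
Qed.

Lemma least_nat (P : nat -> Prop) j : P j -> exists k, P k /\ (k <= j)%nat /\ forall i, (i < k)%nat -> ~ P i.
Proof.
  revert P. induction j as [j IH] using (well_founded_induction Wf_nat.lt_wf). intros P Hj.
  destruct (classic (exists i, (i < j)%nat /\ P i)) as [[i [Hi Pi]]|Hno].
  - destruct (IH i Hi P Pi) as [k [Pk [Hk Hm]]]. exists k. repeat split; auto. lia.
  - exists j. repeat split; auto. intros i Hi Pi. apply Hno. eauto.
Qed.

Lemma order_exists p j : p j <> Czero -> exists k, (k <= j)%nat /\ order1 p (Some k).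
Proof.
  intro H. destruct (least_nat (fun i => p i <> Czero) j H) as [k [Pk [Hk Hm]]].
  exists k. split; auto. split; auto. intros i Hi. apply NNPP. apply Hm; auto.
Qed.

Lemma curve_order_exists n zs : is_curve n zs -> exists m, curve_order zs m.
Proof.
  intros [_ [_ [z [Hz [k Hk]]]]].
  destruct (least_nat (fun j => exists z, In z zs /\ z j <> Czero) k) as [m [Pm [_ Hm]]].
  { eauto. }
  exists m. split; auto. intros j Hj z' Hz'. apply NNPP. intro Hn. apply (Hm j Hj). eauto.
Qed.

Lemma upper_from n (J : mseries -> Prop) zs m g j t : curve_order zs m -> is_curve n zs -> J g ->
  Defs.comp n g zs j <> Czero -> INR j <= t * INR m ->
  exists g e, J g /\ ratio_is n g zs e /\ ERle e (Fin t).
Proof.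
  intros Hm Hc Hg Hj Ht. destruct (order_exists _ _ Hj) as [k [Hk Hord]].
  exists g, (Fin (INR k / INR m)). split; auto. split.
  - exists m, (Some k). auto.
  - simpl. apply div_le_R. apply lt_0_INR. eapply curve_order_pos; eauto.
    apply le_INR in Hk. lra.
Qed.

Lemma pow3_at z m : ord_ge z m -> s1pow z 3 (3 * m)%nat = Cmul (z m) (Cmul (z m) (z m)).
Proof.
  intro H. replace (s1pow z 3) with (s1mul z (s1mul z z)) by (rewrite !s1pow_S, s1pow_0; ring).
  replace (3 * m)%nat with (m + (m + m))%nat by lia.
  rewrite mul_at; auto. rewrite mul_at; auto.
  replace (m + m)%nat with (m + m)%nat by lia. apply ord_ge_mul; auto.
Qed.

Lemma sq_small z2 B : (forall j, (j <= B)%nat -> s1mul z2 z2 j = Czero) ->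
  forall j, (j + j <= B)%nat -> z2 j = Czero.
Proof.
  intros H j Hj. apply NNPP. intro Hn.
  destruct (order_exists _ _ Hn) as [k [Hk [Hk1 Hk2]]].
  assert (ord_ge z2 k) by (intros i Hi; auto).
  apply (Cmul_neq0 _ _ Hk1 Hk1). rewrite <- mul_at by auto. apply H. lia.
Qed.

Lemma curve3_nz z1 z2 z3 m : curve_order [z1;z2;z3] m ->
  z1 m <> Czero \/ z2 m <> Czero \/ z3 m <> Czero.
Proof. intros [[z [Hz Hm]] _]. destruct Hz as [<-|[<-|[<-|[]]]]; auto. Qed.

Lemma curve3_low z1 z2 z3 m : curve_order [z1;z2;z3] m -> ord_ge z1 m /\ ord_ge z2 m /\ ord_ge z3 m.
Proof. intros [_ H]. repeat split; intros j Hj; apply (H j Hj); simpl; auto. Qed.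

Definition f1s z1 z2 z3 j := Cadd (s1pow z1 3 j) (Copp (s1mul z2 z3 j)).
Definition lins a b c (z1 z2 z3 : series1) j := Cadd (Cmul a (z1 j)) (Cadd (Cmul b (z2 j)) (Cmul c (z3 j))).

Lemma up4 z1 z2 z3 a b c m : c <> Czero -> curve_order [z1;z2;z3] m ->
  (exists j, (j <= 4 * m)%nat /\ f1s z1 z2 z3 j <> Czero) \/
  (exists j, (j <= 4 * m)%nat /\ s1mul z2 z2 j <> Czero) \/
  (exists j, (j <= 4 * m)%nat /\ lins a b c z1 z2 z3 j <> Czero).
Proof.
  intros Hc Hm. apply NNPP. intro Hn.
  assert (H1 : forall j, (j <= 4*m)%nat -> f1s z1 z2 z3 j = Czero).
  { intros j Hj. apply NNPP. intro. apply Hn. left. eauto. }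
  assert (H2 : forall j, (j <= 4*m)%nat -> s1mul z2 z2 j = Czero).
  { intros j Hj. apply NNPP. intro. apply Hn. right; left. eauto. }
  assert (H3 : forall j, (j <= 4*m)%nat -> lins a b c z1 z2 z3 j = Czero).
  { intros j Hj. apply NNPP. intro. apply Hn. right; right. eauto. }
  clear Hn.
  pose proof (sq_small z2 _ H2) as Hz2.
  destruct (curve3_low _ _ _ _ Hm) as [L1 [L2 L3]].
  destruct (classic (z1 m = Czero)) as [E1|E1].
  - assert (E2 : z2 m = Czero) by (apply Hz2; lia).
    destruct (curve3_nz _ _ _ _ Hm) as [?|[?|E3]]; try contradiction.
    specialize (H3 m ltac:(lia)). unfold lins in H3. rewrite E1, E2 in H3.
    apply (Cmul_neq0 _ _ Hc E3). rewrite <- H3. ring.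
  - specialize (H1 (3*m)%nat ltac:(lia)). unfold f1s in H1.
    rewrite pow3_at in H1 by auto.
    assert (ord_ge (s1mul z2 z3) (3*m+1)).
    { replace (3*m+1)%nat with ((2*m+1) + m)%nat by lia. apply ord_ge_mul; auto.
      intros j Hj. apply Hz2. lia. }
    rewrite H in H1 by lia.
    apply (Cmul_neq0 _ _ E1 (Cmul_neq0 _ _ E1 E1)). rewrite <- H1. ring.
Qed.

Lemma up3 z1 z2 z3 b m : curve_order [z1;z2;z3] m ->
  (exists j, (j <= 3 * m)%nat /\ f1s z1 z2 z3 j <> Czero) \/
  (exists j, (j <= 3 * m)%nat /\ s1mul z2 z2 j <> Czero) \/
  (exists j, (j <= 3 * m)%nat /\ lins Czero b Cone z1 z2 z3 j <> Czero).
Proof.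
  intros Hm. apply NNPP. intro Hn.
  assert (H1 : forall j, (j <= 3*m)%nat -> f1s z1 z2 z3 j = Czero).
  { intros j Hj. apply NNPP. intro. apply Hn. left. eauto. }
  assert (H2 : forall j, (j <= 3*m)%nat -> s1mul z2 z2 j = Czero).
  { intros j Hj. apply NNPP. intro. apply Hn. right; left. eauto. }
  assert (H3 : forall j, (j <= 3*m)%nat -> lins Czero b Cone z1 z2 z3 j = Czero).
  { intros j Hj. apply NNPP. intro. apply Hn. right; right. eauto. }
  clear Hn.
  pose proof (sq_small z2 _ H2) as Hz2.
  assert (Hz3 : forall j, (j + j <= 3*m)%nat -> z3 j = Czero).
  { intros j Hj. specialize (H3 j ltac:(lia)). unfold lins in H3. rewrite (Hz2 j Hj) in H3.
    rewrite <- H3. ring. }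
  destruct (curve3_low _ _ _ _ Hm) as [L1 [L2 L3]].
  assert (E2 : z2 m = Czero) by (apply Hz2; lia).
  assert (E3 : z3 m = Czero) by (apply Hz3; lia).
  destruct (curve3_nz _ _ _ _ Hm) as [E1|[?|?]]; try contradiction.
  specialize (H1 (3*m)%nat ltac:(lia)). unfold f1s in H1.
  rewrite pow3_at in H1 by auto.
  assert (s1mul z2 z3 (3*m)%nat = Czero).
  { rewrite s1mul_sum. apply sumC_zero. intros i Hi.
    destruct (Nat.le_gt_cases (i + i) (3*m)).
    - rewrite Hz2 by auto. ring.
    - rewrite Hz3 by lia. ring. }
  rewrite H in H1.
  apply (Cmul_neq0 _ _ E1 (Cmul_neq0 _ _ E1 E1)). rewrite <- H1. ring.
Qed.

Definition poly2 (u v : Cx) : series1 := fun k => match k with 1%nat => u | 2%nat => v | _ => Czero end.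

Lemma germ1_poly2 u v : is_germ1 (poly2 u v).
Proof.
  exists (Cnorm u + Cnorm v), 1. intro k. rewrite pow1, Rmult_1_r.
  pose proof (Cnorm_nonneg u); pose proof (Cnorm_nonneg v).
  destruct k as [|[|[|k]]]; simpl; rewrite ?Cnorm_zero; lra.
Qed.

Lemma is_curve_poly2 u1 v1 u2 v2 u3 v3 : u1 <> Czero \/ u2 <> Czero \/ u3 <> Czero ->
  is_curve 3 [poly2 u1 v1; poly2 u2 v2; poly2 u3 v3].
Proof.
  intro H. split; [reflexivity|]. split.
  - repeat constructor; apply germ1_poly2.
  - destruct H as [H|[H|H]]; [exists (poly2 u1 v1)|exists (poly2 u2 v2)|exists (poly2 u3 v3)];
      (split; [simpl; auto|exists 1%nat; exact H]).
Qed.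

Lemma Z0_poly2 u1 v1 u2 v2 u3 v3 : Zs0 [poly2 u1 v1; poly2 u2 v2; poly2 u3 v3].
Proof. repeat constructor. Qed.

Lemma in_gens w f : In f (Igens ++ [w]) -> f = fI1 \/ f = fI2 \/ f = w.
Proof. change (Igens ++ [w]) with [fI1; fI2; w]. intros [<-|[<-|[<-|[]]]]; auto. Qed.

Lemma lower_poly u1 v1 u2 v2 u3 v3 a b c (K : nat) t : u1 <> Czero -> t <= INR K ->
  (forall j, (j < K)%nat -> f1s (poly2 u1 v1) (poly2 u2 v2) (poly2 u3 v3) j = Czero) ->
  (forall j, (j < K)%nat -> s1mul (poly2 u2 v2) (poly2 u2 v2) j = Czero) ->
  (forall j, (j < K)%nat -> lins a b c (poly2 u1 v1) (poly2 u2 v2) (poly2 u3 v3) j = Czero) ->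
  forall g e, gen_ideal 3 (Igens ++ [linform [a;b;c]]) g ->
    ratio_is 3 g [poly2 u1 v1; poly2 u2 v2; poly2 u3 v3] e -> ERle (Fin t) e.
Proof.
  intros Hu Ht H1 H2 H3 g e Hg [m [ov [Hm [Hov ->]]]].
  assert (Hm1 : m = 1%nat).
  { destruct Hm as [[z [Hz Hzm]] Hlow]. destruct m as [|[|m]]; auto.
    - exfalso. destruct Hz as [<-|[<-|[<-|[]]]]; apply Hzm; reflexivity.
    - exfalso. apply Hu. apply (Hlow 1%nat ltac:(lia) (poly2 u1 v1)). simpl; auto. }
  subst m. destruct ov as [k|]; simpl; auto.
  destruct Hov as [Hk _].
  assert (HK : (K <= k)%nat).
  { destruct (Nat.le_gt_cases K k); auto. exfalso. apply Hk.
    enough (HV : ord_ge (Defs.comp 3 g [poly2 u1 v1; poly2 u2 v2; poly2 u3 v3]) K) by (apply HV; auto).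
    apply (ideal_vanish 3 (Igens ++ [linform [a;b;c]])); auto.
    intros f Hf. apply in_gens in Hf. intros j Hj.
      destruct Hf as [ -> | [ -> | -> ] ].
      + rewrite comp_f1 by apply Z0_poly2. apply H1; auto.
      + rewrite comp_f2 by apply Z0_poly2. apply H2; auto.
      + rewrite comp_lin by apply Z0_poly2. apply H3; auto. }
  change (INR 1) with 1. unfold Rdiv. rewrite Rinv_1, Rmult_1_r. apply le_INR in HK. lra.
Qed.

Lemma poly2_00 : poly2 Czero Czero = s1zero.
Proof. extensionality k. destruct k as [|[|[|k]]]; reflexivity. Qed.

Lemma inf_ratios a b : forall g e, gen_ideal 3 (Igens ++ [linform [a;b;Czero]]) g ->
  ratio_is 3 g [poly2 Czero Czero; poly2 Czero Czero; poly2 Cone Czero] e -> e = PInf.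
Proof.
  intros g e Hg [m [ov [Hm [Hov ->]]]]. destruct ov as [k|]; auto.
  exfalso. destruct Hov as [Hk _]. apply Hk.
  enough (HV : ord_ge (Defs.comp 3 g [poly2 Czero Czero; poly2 Czero Czero; poly2 Cone Czero]) (S k)) by (apply HV; auto).
  apply (ideal_vanish 3 (Igens ++ [linform [a;b;Czero]])); auto.
  intros f Hf. apply in_gens in Hf. intros j Hj.
    destruct Hf as [ -> | [ -> | -> ] ].
    + rewrite comp_f1 by apply Z0_poly2. rewrite poly2_00.
      replace (s1pow s1zero 3) with s1zero by (rewrite !s1pow_S, s1pow_0; ring).
      replace (s1mul s1zero (poly2 Cone Czero)) with s1zero by ring.
      unfold s1zero. ring.
    + rewrite comp_f2 by apply Z0_poly2. rewrite poly2_00.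
      replace (s1mul s1zero s1zero) with s1zero by ring.
      reflexivity.
    + rewrite comp_lin by apply Z0_poly2. unfold lins. rewrite poly2_00. unfold s1zero. ring.
Qed.

Lemma curve_inf : is_curve 3 [poly2 Czero Czero; poly2 Czero Czero; poly2 Cone Czero].
Proof. apply is_curve_poly2. right; right. apply Cone_neq0. Qed.

Lemma T1_inf_lemma a b : T1_is 3 (gen_ideal 3 (Igens ++ [linform [a;b;Czero]])) PInf.
Proof.
  apply T1_inf. exists [poly2 Czero Czero; poly2 Czero Czero; poly2 Cone Czero].
  split. apply curve_inf. apply inf_ratios.
Qed.

Lemma curve3_destruct zs : is_curve 3 zs ->
  exists z1 z2 z3, zs = [z1;z2;z3] /\ Zs0 [z1;z2;z3].
Proof.
  intros [Hl [Hf _]]. destruct zs as [|z1 [|z2 [|z3 [|]]]]; simpl in Hl; try discriminate.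
  exists z1, z2, z3. split; auto. unfold Zs0. eapply Forall_impl; [|exact Hf]. simpl. tauto.
Qed.

Lemma INR_le_mul j K m : (j <= K * m)%nat -> INR j <= INR K * INR m.
Proof. intro H. rewrite <- mult_INR. apply le_INR. auto. Qed.

Lemma T1_four a b c : a <> Czero -> c <> Czero ->
  T1_is 3 (gen_ideal 3 (Igens ++ [linform [a;b;c]])) (Fin 4).
Proof.
  intros Ha Hc. apply T1_fin.
  - intros zs Hzs. pose proof Hzs as Hzs'. destruct (curve3_destruct _ Hzs) as [z1 [z2 [z3 [-> HZ]]]].
    destruct (curve_order_exists _ _ Hzs) as [m Hm].
    assert (G : forall f, In f (Igens ++ [linform [a;b;c]]) -> gen_ideal 3 (Igens ++ [linform [a;b;c]]) f)
      by (apply gens_in, germ_lin).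
    assert (R4 : forall j, (j <= 4 * m)%nat -> INR j <= 4 * INR m).
    { intros j Hj. replace 4 with (INR 4) by (simpl; lra). apply INR_le_mul; auto. }
    destruct (up4 z1 z2 z3 a b c m Hc Hm) as [[j [Hj Hn]]|[[j [Hj Hn]]|[j [Hj Hn]]]].
    + apply (upper_from 3 _ _ m fI1 j); auto. apply G; simpl; auto.
      rewrite comp_f1; auto.
    + apply (upper_from 3 _ _ m fI2 j); auto. apply G; simpl; auto.
      rewrite comp_f2; auto.
    + apply (upper_from 3 _ _ m (linform [a;b;c]) j); auto. apply G; simpl; auto.
      rewrite comp_lin; auto.
  - exists [poly2 (Cmul a c) Czero; poly2 Czero (Copp (Cmul a (Cmul c (Cmul c c))));
            poly2 (Copp (Cmul a a)) (Cmul a (Cmul b (Cmul c c)))].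
    split.
    + apply is_curve_poly2. left. apply Cmul_neq0; auto.
    + apply (lower_poly _ _ _ _ _ _ a b c 4).
      * apply Cmul_neq0; auto.
      * simpl; lra.
      * intros j Hj. unfold f1s. destruct j as [|[|[|[|j]]]]; try lia;
          cbn -[Cmul Cadd Copp Czero Cone]; ring.
      * intros j Hj. destruct j as [|[|[|[|j]]]]; try lia;
          cbn -[Cmul Cadd Copp Czero Cone]; ring.
      * intros j Hj. unfold lins. destruct j as [|[|[|[|j]]]]; try lia;
          cbn -[Cmul Cadd Copp Czero Cone]; ring.
Qed.

Lemma T1_three b : T1_is 3 (gen_ideal 3 (Igens ++ [linform [Czero;b;Cone]])) (Fin 3).
Proof.
  apply T1_fin.
  - intros zs Hzs. pose proof Hzs as Hzs'. destruct (curve3_destruct _ Hzs) as [z1 [z2 [z3 [-> HZ]]]].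
    destruct (curve_order_exists _ _ Hzs) as [m Hm].
    assert (G : forall f, In f (Igens ++ [linform [Czero;b;Cone]]) -> gen_ideal 3 (Igens ++ [linform [Czero;b;Cone]]) f)
      by (apply gens_in, germ_lin).
    assert (R4 : forall j, (j <= 3 * m)%nat -> INR j <= 3 * INR m).
    { intros j Hj. replace 3 with (INR 3) by (simpl; lra). apply INR_le_mul; auto. }
    destruct (up3 z1 z2 z3 b m Hm) as [[j [Hj Hn]]|[[j [Hj Hn]]|[j [Hj Hn]]]].
    + apply (upper_from 3 _ _ m fI1 j); auto. apply G; simpl; auto.
      rewrite comp_f1; auto.
    + apply (upper_from 3 _ _ m fI2 j); auto. apply G; simpl; auto.
      rewrite comp_f2; auto.
    + apply (upper_from 3 _ _ m (linform [Czero;b;Cone]) j); auto. apply G; simpl; auto.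
      rewrite comp_lin; auto.
  - exists [poly2 Cone Czero; poly2 Czero Czero; poly2 Czero Czero].
    split.
    + apply is_curve_poly2. left. apply Cone_neq0.
    + apply (lower_poly _ _ _ _ _ _ Czero b Cone 3).
      * apply Cone_neq0.
      * simpl; lra.
      * intros j Hj. unfold f1s. destruct j as [|[|[|j]]]; try lia;
          cbn -[Cmul Cadd Copp Czero Cone]; ring.
      * intros j Hj. destruct j as [|[|[|j]]]; try lia;
          cbn -[Cmul Cadd Copp Czero Cone]; ring.
      * intros j Hj. unfold lins. destruct j as [|[|[|j]]]; try lia;
          cbn -[Cmul Cadd Copp Czero Cone]; ring.
Qed.

Lemma T1_ge3 a b c e : T1_is 3 (gen_ideal 3 (Igens ++ [linform [a;b;c]])) e -> ERle (Fin 3) e.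
Proof.
  intro HT. destruct (classic (c = Czero)) as [->|Hc].
  - apply (T1_ge _ _ _ _ _ HT curve_inf). intros g e' Hg Hr.
    rewrite (inf_ratios a b g e' Hg Hr). simpl; auto.
  - apply (T1_ge _ _ _ _ [poly2 c Czero; poly2 Czero Czero; poly2 (Copp a) Czero] HT).
    + apply is_curve_poly2. left; auto.
    + apply (lower_poly _ _ _ _ _ _ a b c 3).
      * auto.
      * simpl; lra.
      * intros j Hj. unfold f1s. destruct j as [|[|[|j]]]; try lia;
          cbn -[Cmul Cadd Copp Czero Cone]; ring.
      * intros j Hj. destruct j as [|[|[|j]]]; try lia;
          cbn -[Cmul Cadd Copp Czero Cone]; ring.
      * intros j Hj. unfold lins. destruct j as [|[|[|j]]]; try lia;
          cbn -[Cmul Cadd Copp Czero Cone]; ring.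
Qed.

Theorem mainTheorem2 :
  (* T_2(I) = 3 *)
  Tq_is 3 2 Igens (Fin 3) /\
  (* beta_2(I) = 4: a nonempty Zariski open set of planes {w = 0} (w = a z1 + b z2 + c z3 <> 0,
     G^2(Cx^3) identified with P^2) given by a homogeneous polynomial P on which T_1(I,w) = 4 *)
  (exists (P : mpoly) (d : nat), homogeneous 3 P d /\
     (exists a b c : Cx, [a; b; c] <> [Czero; Czero; Czero] /\ peval P [a; b; c] <> Czero) /\
     (forall a b c : Cx, [a; b; c] <> [Czero; Czero; Czero] -> peval P [a; b; c] <> Czero ->
        T1_is 3 (gen_ideal 3 (Igens ++ [linform [a; b; c]])) (Fin 4))) /\
  (* T_1(I, a z1 + b z2 + z3) = 4 if a <> 0 *)
  (forall a b : Cx, a <> Czero ->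
     T1_is 3 (gen_ideal 3 (Igens ++ [linform [a; b; Cone]])) (Fin 4)) /\
  (* T_1(I, b z2 + z3) = 3 *)
  (forall b : Cx, T1_is 3 (gen_ideal 3 (Igens ++ [linform [Czero; b; Cone]])) (Fin 3)) /\
  (* T_1(I, a z1 + b z2) = infinity *)
  (forall a b : Cx, T1_is 3 (gen_ideal 3 (Igens ++ [linform [a; b; Czero]])) PInf).
Proof.
  split; [|split; [|split; [|split]]].
  - split.
    + intros y [ws [Hl [Hf HT]]]. destruct ws as [|w [|]]; simpl in Hl; try discriminate.
      inversion Hf as [|? ? Hw _]; subst.
      destruct w as [|a [|b [|c [|]]]]; simpl in Hw; try discriminate.
      eapply T1_ge3. exact HT.
    + intros l Hl. apply Hl. exists [[Czero; Czero; Cone]]. split; [reflexivity|].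
      split; [repeat constructor|]. apply T1_three.
  - exists [(Cone, [1;0;1]%nat)], 2%nat.
    assert (HP : forall a b c, peval [(Cone, [1;0;1]%nat)] [a;b;c] = Cmul a c).
    { intros. unfold peval. cbn -[Cmul Cadd Copp Czero Cone]. ring. }
    split; [|split].
    + repeat constructor.
    + exists Cone, Cone, Cone. split.
      * intro E. assert (Cone = Czero) by congruence. apply Cone_neq0; auto.
      * rewrite HP. apply Cmul_neq0; apply Cone_neq0.
    + intros a b c _ Hp. rewrite HP in Hp. apply T1_four.
      * intro E; apply Hp; rewrite E; ring.
      * intro E; apply Hp; rewrite E; ring.
  - intros a b Ha. apply T1_four; auto. apply Cone_neq0.
  - apply T1_three.
  - apply T1_inf_lemma.
Qed.
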